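(* Let $H$ be the group with presentation $$\langle \{x_m\}_{m\in\mathbb{Z}}\cup\{y_n\}_{n\in\mathbb{Z}} \mid \{\,y_n = x_{n+1}^{-1}y_{n+1}^{-1}x_{n+1}\,\}_{n\in\mathbb{Z}}\rangle.$$ Then $H$ is locally free, and each of the generators $x_m$ ($m\in\mathbb{Z}$) and $y_n$ ($n\in\mathbb{Z}$) represents a nontrivial element of $H$.
   Context: A group is locally free if every finitely generated subgroup is free. Work in $\mathsf{ZFC}$. *)

(* Defs.v *)
(* The group H is given by its presentation: elements are
   words in the generators x_m, y_n and their inverses, modulo the
   congruence generated by free cancellation and insertion of relators. *)
From Stdlib Require Import ZArith List Relations.
Import ListNotations.
Open Scope Z_scope.

Inductive gen : Type := X (m : Z) | Y (n : Z).

(* a letter: a generator together with an exponent sign (true = inverse) *)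
Definition letter : Type := (gen * bool)%type.
Definition word : Type := list letter.

Definition flip (a : letter) : letter := (fst a, negb (snd a)).
Definition winv (w : word) : word := rev (map flip w).

Definition gx (m : Z) : word := [(X m, false)].
Definition gy (n : Z) : word := [(Y n, false)].

(* relator for  y_n = x_{n+1}^{-1} y_{n+1}^{-1} x_{n+1}, i.e.
   y_n (x_{n+1}^{-1} y_{n+1}^{-1} x_{n+1})^{-1} *)
Definition relator (n : Z) : word :=
  gy n ++ winv (winv (gx (n+1)) ++ winv (gy (n+1)) ++ gx (n+1)).

Inductive step : word -> word -> Prop :=
| step_cancel (u v : word) (a : letter) : step (u ++ v) (u ++ [a; flip a] ++ v)
| step_rel (u v : word) (n : Z) : step (u ++ v) (u ++ relator n ++ v).

Definition heq : word -> word -> Prop := clos_refl_sym_trans word step.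

Fixpoint evalw {I : Type} (b : I -> word) (ws : list (I * bool)) : word :=
  match ws with
  | [] => []
  | (i, e) :: ws' => (if e then winv (b i) else b i) ++ evalw b ws'
  end.

Fixpoint reduced {I : Type} (ws : list (I * bool)) : Prop :=
  match ws with
  | (i, e) :: (((j, f) :: _) as ws') => ~ (i = j /\ f = negb e) /\ reduced ws'
  | _ => True
  end.

Definition gen_sub (gs : list word) (w : word) : Prop :=
  exists ws : list (word * bool),
    (forall p, In p ws -> In (fst p) gs) /\ heq w (evalw (fun u => u) ws).

Definition free_on (S : word -> Prop) {I : Type} (b : I -> word) : Prop :=
  (forall i, S (b i)) /\
  (forall w, S w -> exists ws, heq w (evalw b ws)) /\
  (forall ws, ws <> [] -> reduced ws -> ~ heq (evalw b ws) []).

Definition is_free (S : word -> Prop) : Prop :=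
  exists (I : Type) (b : I -> word), free_on S b.

Definition H_locally_free : Prop :=
  forall gs : list word, is_free (gen_sub gs).

(* Main.v *)
Require Import Defs.
From Stdlib Require Import ZArith List.
From Stdlib Require Import Lia Classical ProofIrrelevance Wellfounded Relations.
Import ListNotations.
Open Scope nat_scope.


Lemma flip_flip : forall a, flip (flip a) = a.
Proof. intros [g e]; unfold flip; simpl; rewrite Bool.negb_involutive; reflexivity. Qed.

Lemma flip_neq : forall a, flip a <> a.
Proof. intros [g e]; unfold flip; simpl; intro H; inversion H; destruct e; discriminate. Qed.

Lemma winv_app : forall u v, winv (u ++ v) = winv v ++ winv u.
Proof. intros; unfold winv; rewrite map_app, rev_app_distr; reflexivity. Qed.

Lemma winv_winv : forall u, winv (winv u) = u.
Proof. intros; unfold winv; rewrite map_rev, rev_involutive, map_map.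
  rewrite <- (map_id u) at 2. apply map_ext. apply flip_flip. Qed.

Lemma winv_cons : forall a u, winv (a :: u) = winv u ++ [flip a].
Proof. reflexivity. Qed.

Lemma winv_length : forall u, length (winv u) = length u.
Proof. intros; unfold winv; rewrite length_rev, length_map; reflexivity. Qed.

Lemma winv_nil : winv [] = [].
Proof. reflexivity. Qed.

Lemma winv_inj : forall u v, winv u = winv v -> u = v.
Proof. intros u v H. rewrite <- (winv_winv u), <- (winv_winv v), H; reflexivity. Qed.

Definition leq_dec : forall a b : letter, {a = b} + {a <> b}.
Proof. decide equality. apply Bool.bool_dec. decide equality; apply Z.eq_dec. Qed.
Arguments flip : simpl never.

Fixpoint isred (w : word) : Prop :=
  match w with
  | a :: ((b :: _) as w') => b <> flip a /\ isred w'
  | _ => True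
  end.

Lemma isred_tail : forall a w, isred (a :: w) -> isred w.
Proof. intros a [|b w] H; simpl in *; tauto. Qed.

Lemma isred_app_l : forall x y, isred (x ++ y) -> isred x.
Proof.
  induction x as [|a x IH]; intros y H; simpl in *; auto.
  destruct x as [|b x]; simpl in *; auto.
  destruct H as [H1 H2]; split; auto. apply (IH y); exact H2.
Qed.

Lemma isred_app_r : forall x y, isred (x ++ y) -> isred y.
Proof.
  induction x as [|a x IH]; intros y H; simpl in *; auto.
  apply IH. apply (isred_tail a). exact H.
Qed.

Lemma isred_app_iff : forall x a y, isred (x ++ a :: y) <-> isred (x ++ [a]) /\ isred (a :: y).
Proof.
  induction x as [|c x IH]; intros a y; simpl.
  - destruct y; simpl; tauto.
  - destruct x as [|d x]; simpl.
    + destruct y; simpl; tauto.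
    + specialize (IH a y). simpl in IH. tauto.
Qed.

Lemma isred_app : forall x y, isred x -> isred y ->
  (forall x' a b y', x = x' ++ [a] -> y = b :: y' -> b <> flip a) -> isred (x ++ y).
Proof.
  intros x y Hx Hy Hb. destruct y as [|b y'].
  - rewrite app_nil_r; auto.
  - destruct x as [|c x0]. simpl; auto.
    destruct (exists_last (l:=c::x0)) as [x' [a Ex]]. discriminate.
    rewrite Ex in *. rewrite <- app_assoc. simpl. apply isred_app_iff. split; auto.
    simpl. split; auto. eapply Hb; eauto.
Qed.

Lemma isred_infix : forall p m q, isred (p ++ m ++ q) -> isred m.
Proof. intros p m q H. apply isred_app_r in H. apply isred_app_l in H. exact H. Qed.

Lemma winv_last : forall d t x c, winv (d :: t) = x ++ [c] -> c = flip d.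
Proof. intros d t x c H. rewrite winv_cons in H. apply app_inj_tail in H. destruct H; congruence. Qed.

Lemma isred_winv : forall x, isred x -> isred (winv x).
Proof.
  induction x as [|a x IH]; intros H. simpl; auto.
  rewrite winv_cons. apply isred_app.
  - apply IH. eapply isred_tail; eauto.
  - simpl; auto.
  - intros x' c b y' E1 E2. inversion E2; subst.
    destruct x as [|d t]. { destruct x'; simpl in E1; discriminate. }
    apply winv_last in E1. subst c. simpl in H. destruct H as [H _].
    intro E. apply H. rewrite flip_flip in E. rewrite <- E. reflexivity.
Qed.

Lemma winv_s_s_not_red : forall s, isred (winv s ++ s) -> s = [].
Proof.
  intros [|b s] H; auto. exfalso. rewrite winv_cons, <- app_assoc in H. simpl in H.
  apply isred_app_iff in H. destruct H as [_ H]. simpl in H. destruct H as [H _].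
  apply H. rewrite flip_flip; reflexivity.
Qed.

Lemma winv_self : forall n x, length x <= n -> isred x -> winv x = x -> x = [].
Proof.
  induction n as [|n IH]; intros x Hl Hr He.
  - destruct x; simpl in Hl; auto; lia.
  - destruct x as [|a x']; auto. exfalso.
    destruct x' as [|b0 x0].
    + simpl in He. inversion He. eapply flip_neq; eauto.
    + destruct (exists_last (l:=b0::x0)) as [m [b Em]]. discriminate.
      rewrite Em in *. rewrite winv_cons, winv_app in He. simpl in He.
      inversion He as [[E1 E2]].
      rewrite flip_flip in E2.
      assert (E3 := E2). apply app_inj_tail in E3. destruct E3 as [E3 E4].
      assert (Hm : isred m). { apply (isred_infix [a] m [b]). exact Hr. }
      assert (Hl' : length m <= n). { simpl in Hl. rewrite length_app in Hl. simpl in Hl. lia. }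
      pose proof (IH m Hl' Hm E3). subst m. simpl in Hr. destruct Hr as [Hr _].
      apply Hr. rewrite <- E1, flip_flip. reflexivity.
Qed.

Definition credr (a : letter) (r : word) : word :=
  match r with
  | b :: r' => if leq_dec b (flip a) then r' else a :: r
  | [] => [a]
  end.

Definition fr (w : word) : word := fold_right credr [] w.

Lemma isred_credr : forall a r, isred r -> isred (credr a r).
Proof.
  intros a [|b r] H; simpl; auto.
  destruct (leq_dec b (flip a)). eapply isred_tail; eauto. simpl. split; auto.
Qed.

Lemma fr_red : forall w, isred (fr w).
Proof. induction w; simpl; auto. apply isred_credr; auto. Qed.

Lemma fr_id : forall w, isred w -> fr w = w.
Proof.
  induction w as [|a w IH]; intros H; simpl; auto.
  rewrite IH by (eapply isred_tail; eauto).
  destruct w as [|b w]; simpl; auto.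
  destruct (leq_dec b (flip a)); auto. simpl in H. tauto.
Qed.

Lemma fr_app_F : forall x y, fr (x ++ y) = fold_right credr (fr y) x.
Proof. intros; unfold fr; rewrite fold_right_app; reflexivity. Qed.

Lemma F_red : forall x r, isred r -> isred (fold_right credr r x).
Proof. induction x; simpl; intros; auto. apply isred_credr; auto. Qed.

Lemma credr_cancel : forall a R, isred R -> credr a (credr (flip a) R) = R.
Proof.
  intros a [|c R] H; simpl.
  - destruct (leq_dec (flip a) (flip a)); congruence.
  - rewrite flip_flip. destruct (leq_dec c a).
    + subst c. destruct R as [|d R]; simpl; auto.
      destruct (leq_dec d (flip a)); auto. simpl in H; tauto.
    + simpl. destruct (leq_dec (flip a) (flip a)); congruence.
Qed.

Lemma F_fr : forall x r, isred r -> fold_right credr r x = fold_right credr r (fr x).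
Proof.
  induction x as [|a x IH]; intros r Hr; simpl; auto.
  rewrite (IH r Hr). unfold fr at 2. simpl. fold (fr x).
  destruct (fr x) as [|b t] eqn:E; simpl; auto.
  destruct (leq_dec b (flip a)); simpl; auto.
  subst b. rewrite credr_cancel; auto. apply F_red; auto.
Qed.

Lemma fr_app : forall x y, fr (x ++ y) = fr (fr x ++ fr y).
Proof.
  intros. rewrite !fr_app_F. rewrite (fr_id (fr y)) by apply fr_red.
  apply F_fr, fr_red.
Qed.

Lemma fr_fr : forall x, fr (fr x) = fr x.
Proof. intros; apply fr_id, fr_red. Qed.

Lemma fr_winv_r : forall x, fr (x ++ winv x) = [].
Proof.
  induction x as [|a x IH]; simpl; auto.
  change (credr a (fr (x ++ winv (a :: x))) = []).
  rewrite winv_cons, app_assoc, fr_app, IH. simpl.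
  destruct (leq_dec (flip a) (flip a)); congruence.
Qed.

Lemma fr_winv_l : forall x, fr (winv x ++ x) = [].
Proof. intros. rewrite <- (winv_winv x) at 2. apply fr_winv_r. Qed.

Lemma fr_mid : forall m x y, fr m = [] -> fr (x ++ m ++ y) = fr (x ++ y).
Proof.
  intros m x y H. rewrite fr_app, (fr_app m y), H. simpl. rewrite fr_fr.
  rewrite <- fr_app. reflexivity.
Qed.

Lemma fr_mid_l : forall m y, fr m = [] -> fr (m ++ y) = fr y.
Proof. intros. apply (fr_mid m [] y); auto. Qed.

Lemma fr_mid_r : forall m x, fr m = [] -> fr (x ++ m) = fr x.
Proof. intros. rewrite <- (app_nil_r (x ++ m)), <- app_assoc. rewrite fr_mid; auto.
  rewrite app_nil_r; auto. Qed.

Lemma fr_in : forall w a, In a (fr w) -> In a w.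
Proof.
  induction w as [|b w IH]; intros a H; [exact H|].
  change (In a (credr b (fr w))) in H. simpl.
  destruct (fr w) as [|c r] eqn:E; simpl in H.
  - destruct H as [H|[]]; auto.
  - destruct (leq_dec c (flip b)).
    + right. apply IH. right. auto.
    + destruct H as [H|H]; auto.
Qed.

Fixpoint cp (r v : word) : nat :=
  match r, v with
  | a :: r', b :: v' => if leq_dec b (flip a) then S (cp r' v') else 0
  | _, _ => 0
  end.

Definition cc (u v : word) : nat := cp (rev u) v.

Lemma cp_decomp : forall r v, exists s1 r1 v1, r = s1 ++ r1 /\ v = map flip s1 ++ v1 /\
  length s1 = cp r v /\ (forall a b r' v', r1 = a :: r' -> v1 = b :: v' -> b <> flip a).
Proof.
  induction r as [|a r IH]; intros v.
  - exists [], [], v. simpl; repeat split; auto. intros; discriminate.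
  - destruct v as [|b v].
    + exists [], (a :: r), []. simpl; repeat split; auto. intros; discriminate.
    + simpl. destruct (leq_dec b (flip a)).
      * destruct (IH v) as [s1 [r1 [v1 [E1 [E2 [E3 E4]]]]]].
        exists (a :: s1), r1, v1. subst. simpl. repeat split; auto.
      * exists [], (a :: r), (b :: v). simpl; repeat split; auto.
        intros a' b' r' v' H1 H2. inversion H1; inversion H2; subst; auto.
Qed.

Lemma cp_prefix : forall r p x y, cp r (p ++ x) < length p -> cp r (p ++ y) = cp r (p ++ x).
Proof.
  induction r as [|a r IH]; intros p x y H; simpl; auto.
  destruct p as [|b p]; simpl in *. lia.
  destruct (leq_dec b (flip a)); auto. f_equal. apply IH. lia.
Qed.

Lemma cp_flip : forall a b, cp (map flip a) (map flip b) = cp b a.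
Proof.
  induction a as [|x a IH]; intros [|y b]; simpl; auto.
  destruct (leq_dec (flip y) (flip (flip x))) as [E|E];
  destruct (leq_dec x (flip y)) as [E'|E']; auto.
  - rewrite flip_flip in E. exfalso; apply E'. rewrite <- E; auto.
  - exfalso; apply E. rewrite E', !flip_flip. reflexivity.
Qed.

Lemma cc_sym : forall u v, cc (winv v) (winv u) = cc u v.
Proof.
  intros. unfold cc, winv. rewrite rev_involutive, <- map_rev. apply cp_flip.
Qed.

Lemma CU : forall u v, isred u -> isred v -> exists u1 s v1,
  u = u1 ++ s /\ v = winv s ++ v1 /\ length s = cc u v /\
  fr (u ++ v) = u1 ++ v1 /\ isred (u1 ++ v1).
Proof.
  intros u v Hu Hv. unfold cc.
  destruct (cp_decomp (rev u) v) as [s1 [r1 [v1 [E1 [E2 [E3 E4]]]]]].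
  assert (Eu : u = rev r1 ++ rev s1) by (rewrite <- rev_app_distr, <- E1, rev_involutive; auto).
  assert (Ew : winv (rev s1) = map flip s1) by (unfold winv; rewrite map_rev, rev_involutive; auto).
  assert (Hred : isred (rev r1 ++ v1)).
  { apply isred_app.
    - rewrite Eu in Hu. eapply isred_app_l; eauto.
    - rewrite E2 in Hv. eapply isred_app_r; eauto.
    - intros x' a b y' H1 H2. apply (E4 a b (rev x') y'); auto.
      rewrite <- (rev_involutive r1), H1, rev_app_distr. reflexivity. }
  exists (rev r1), (rev s1), v1. repeat split; auto.
  - rewrite Ew; auto.
  - rewrite length_rev; auto.
  - rewrite Eu, E2, <- Ew, <- app_assoc, (app_assoc (rev s1)), fr_mid by apply fr_winv_r.
    apply fr_id; auto.
Qed.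

Lemma cc_le : forall u v, cc u v <= length u /\ cc u v <= length v.
Proof.
  intros. unfold cc. destruct (cp_decomp (rev u) v) as [s1 [r1 [v1 [E1 [E2 [E3 E4]]]]]].
  rewrite <- E3. split.
  - rewrite <- (length_rev u), E1, length_app; lia.
  - rewrite E2, length_app, length_map; lia.
Qed.

Lemma app_len_split : forall (a b c d : word), a ++ b = c ++ d -> length a <= length c ->
  exists m, c = a ++ m /\ b = m ++ d.
Proof.
  induction a as [|x a IH]; intros b c d E H. exists c; auto.
  destruct c as [|y c]; simpl in H. lia.
  simpl in E. inversion E; subst. destruct (IH b c d) as [m [E1 E2]]; auto. lia.
  exists m; subst; auto.
Qed.

Lemma app_len_eq : forall (a b c d : word), a ++ b = c ++ d -> length a = length c -> a = c /\ b = d.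
Proof.
  intros. destruct (app_len_split a b c d) as [m [E1 E2]]; auto. lia.
  subst c. rewrite length_app in H0. destruct m; simpl in H0; [|lia].
  rewrite app_nil_r in *; auto.
Qed.

Lemma L_self : forall u, isred u -> u <> [] -> 2 * cc u u < length u.
Proof.
  intros u Hu Hne. destruct (CU u u Hu Hu) as [u1 [s [v1 [E1 [E2 [E3 _]]]]]].
  destruct (Nat.lt_ge_cases (2 * cc u u) (length u)) as [H|H]; auto. exfalso.
  assert (Lu : length u = length u1 + length s) by (rewrite E1, length_app; auto).
  assert (Lv : length u = length s + length v1) by (rewrite E2, length_app, winv_length; auto).
  assert (E : u1 ++ s = winv s ++ v1) by congruence.
  destruct (app_len_split u1 s (winv s) v1 E) as [m [F1 F2]]. rewrite winv_length. lia.
  rewrite F2, winv_app in F1.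
  destruct (app_len_eq (winv v1) (winv m) u1 m) as [G1 G2]; auto.
  rewrite winv_length. lia.
  assert (Hm : m = []).
  { apply (winv_self (length m)); auto. rewrite E1, F2 in Hu. apply (isred_infix u1 m v1); auto. }
  subst m. simpl in F2. subst s. subst u1. rewrite E1 in Hu. apply winv_s_s_not_red in Hu.
  subst v1. apply Hne. apply length_zero_iff_nil. simpl in Lu. lia.
Qed.


Definition pm (U : list word) (z : word) : Prop := In z U \/ In (winv z) U.
Definition AR (U : list word) : Prop := forall x, In x U -> isred x.

Definition NR (U : list word) : Prop :=
  (forall x, In x U -> x <> []) /\
  (forall pre x post, U = pre ++ x :: post -> ~ In x (pre ++ post) /\ ~ In (winv x) (pre ++ post)) /\
  (forall u v, pm U u -> pm U v -> v <> winv u -> 2 * cc u v <= length u /\ 2 * cc u v <= length v) /\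
  (forall u v w, pm U u -> pm U v -> pm U w -> v <> winv u -> w <> winv v ->
      cc u v + cc v w < length v).

Lemma pm_red : forall U z, AR U -> pm U z -> isred z.
Proof.
  intros U z H [Hz|Hz]; auto. apply H in Hz. apply isred_winv in Hz. rewrite winv_winv in Hz; auto.
Qed.

Lemma pm_ne : forall U z, NR U -> pm U z -> z <> [].
Proof.
  intros U z [H _] [Hz|Hz]; auto. apply H in Hz. intro E; subst; apply Hz; reflexivity.
Qed.

Fixpoint chainok (zs : list word) : Prop :=
  match zs with
  | z :: ((z' :: _) as r) => z' <> winv z /\ chainok r
  | _ => True
  end.

Definition nextc (z : word) (zs : list word) : nat :=
  match zs with z1 :: _ => cc z z1 | [] => 0 end.

Lemma chain_inv : forall U, AR U -> NR U -> forall zs z0, Forall (pm U) (z0 :: zs) ->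
  chainok (z0 :: zs) -> exists z0' s t, z0 = z0' ++ s /\ fr (concat (z0 :: zs)) = z0' ++ t /\
  length s = nextc z0 zs.
Proof.
  intros U HA HN. induction zs as [|z1 zs IH]; intros z0 HF Hc.
  - exists z0, [], []. simpl. rewrite !app_nil_r. split; auto. split; auto.
    apply fr_id. apply (pm_red U); auto. inversion HF; auto.
  - inversion HF as [|? ? Hz0 HF1]; subst.
    destruct Hc as [Hc1 Hc2].
    destruct (IH z1 HF1 Hc2) as [z1' [s1 [t1 [E1 [E2 E3]]]]].
    assert (Hr0 : isred z0) by (apply (pm_red U); auto).
    assert (Hz1 : pm U z1) by (inversion HF1; auto).
    pose proof HN as [HN0 [HN1 [HN2 HN3]]].
    assert (Hk : cc z0 z1 < length z1').
    { assert (L1 : length z1 = length z1' + length s1) by (rewrite E1, length_app; auto).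
      destruct zs as [|z2 zs].
      - simpl in E3. destruct (HN2 z0 z1 Hz0 Hz1 Hc1) as [_ H2].
        assert (z1 <> []) by (apply (pm_ne U); auto).
        destruct z1; [congruence|]. simpl in *. lia.
      - simpl in E3. inversion HF1 as [|? ? _ HF2]. inversion HF2 as [|? ? Hz2 _].
        destruct Hc2 as [Hc3 _].
        pose proof (HN3 z0 z1 z2 Hz0 Hz1 Hz2 Hc1 Hc3). lia. }
    assert (Hk2 : cc z0 (z1' ++ t1) = cc z0 z1).
    { unfold cc. rewrite E1. apply cp_prefix. rewrite <- E1. exact Hk. }
    assert (Hr1 : isred (z1' ++ t1)) by (rewrite <- E2; apply fr_red).
    destruct (CU z0 (z1' ++ t1) Hr0 Hr1) as [u1 [s [v1 [F1 [F2 [F3 [F4 F5]]]]]]].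
    exists u1, s, v1. split; auto. split.
    + change (concat (z0 :: z1 :: zs)) with (z0 ++ concat (z1 :: zs)).
      rewrite fr_app, E2, (fr_id z0) by auto. exact F4.
    + simpl. rewrite F3, Hk2. reflexivity.
Qed.

Lemma chain_free : forall U, AR U -> NR U -> forall zs, zs <> [] -> Forall (pm U) zs ->
  chainok zs -> fr (concat zs) <> [].
Proof.
  intros U HA HN [|z0 zs] Hne HF Hc. congruence.
  destruct (chain_inv U HA HN zs z0 HF Hc) as [z0' [s [t [E1 [E2 E3]]]]].
  rewrite E2. intro E. apply app_eq_nil in E. destruct E as [E _]. subst z0'.
  simpl in E1. subst s.
  assert (Hz0 : pm U z0) by (inversion HF; auto).
  assert (z0 <> []) by (apply (pm_ne U); auto).
  destruct zs as [|z1 zs]; simpl in E3.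
  - destruct z0; [congruence|simpl in E3; lia].
  - inversion HF as [|? ? _ HF1]. inversion HF1 as [|? ? Hz1 _].
    destruct Hc as [Hc _]. destruct HN as [_ [_ [HN2 _]]].
    destruct (HN2 z0 z1 Hz0 Hz1 Hc) as [Hq _].
    destruct z0; [congruence|simpl in *; lia].
Qed.


Definition zc (z : Z) : nat :=
  match z with Z0 => 0 | Zpos p => 2 * Pos.to_nat p | Zneg p => 2 * Pos.to_nat p + 1 end.

Lemma zc_inj : forall a b, zc a = zc b -> a = b.
Proof.
  intros [|p|p] [|q|q]; simpl; intro H; auto;
  try (pose proof (Pos2Nat.is_pos p)); try (pose proof (Pos2Nat.is_pos q)); try lia;
  f_equal; apply Pos2Nat.inj; lia.
Qed.

Definition gc (g : gen) : nat := match g with X m => 2 * zc m | Y n => 2 * zc n + 1 end.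

Lemma gc_inj : forall a b, gc a = gc b -> a = b.
Proof. intros [m|m] [n|n]; simpl; intro H; try lia; f_equal; apply zc_inj; lia. Qed.

Definition lcode (a : letter) : nat := 2 * gc (fst a) + (if snd a then 1 else 0).

Lemma lcode_inj : forall a b, lcode a = lcode b -> a = b.
Proof.
  intros [g e] [h f]; unfold lcode; simpl; intro H.
  assert (gc g = gc h /\ e = f) as [H1 H2] by (destruct e, f; split; auto; lia).
  apply gc_inj in H1. subst; auto.
Qed.

Fixpoint lexlt (l l' : word) : Prop :=
  match l, l' with
  | a :: t, b :: t' => lcode a < lcode b \/ (a = b /\ lexlt t t')
  | _, _ => False
  end.

Definition sl (l l' : word) : Prop := length l = length l' /\ lexlt l l'.

Lemma sl_wf : well_founded sl.
Proof.
  assert (H : forall n l, length l = n -> Acc sl l).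
  { induction n as [|n IHn]; intros l Hl.
    - destruct l; [|discriminate]. constructor. intros y [_ Hy]. destruct y; simpl in Hy; contradiction.
    - assert (K : forall m a, lcode a = m -> forall l0, Acc sl l0 -> length l0 = n -> Acc sl (a :: l0)).
      { induction m as [m IHm] using (well_founded_induction lt_wf).
        intros a Ha l0 Hacc. induction Hacc as [l0 _ IHacc]. intros Hl0.
        constructor. intros y [Hy1 Hy2]. destruct y as [|b y]; simpl in Hy2; [contradiction|].
        simpl in Hy1. destruct Hy2 as [Hy2|[Hy2 Hy3]].
        - apply (IHm (lcode b)); [subst; auto|auto|apply IHn; lia|lia].
        - subst b. apply IHacc; [split; auto; lia|lia]. }
      destruct l as [|a l0]; [discriminate|]. simpl in Hl.
      apply (K (lcode a)); auto. }
  intro l. apply (H (length l)); auto.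
Qed.

Lemma lexlt_tri : forall a b, length a = length b -> a <> b -> lexlt a b \/ lexlt b a.
Proof.
  induction a as [|x a IH]; intros [|y b] Hl Hne; simpl in *; try lia; try congruence.
  destruct (Nat.lt_trichotomy (lcode x) (lcode y)) as [H|[H|H]]; auto.
  apply lcode_inj in H. subst y.
  assert (a <> b) by congruence. destruct (IH b) as [K|K]; auto.
Qed.

Lemma lexlt_app : forall a b m m', lexlt a b -> lexlt (a ++ m) (b ++ m').
Proof.
  induction a as [|x a IH]; intros [|y b] m m' H; simpl in *; try contradiction.
  destruct H as [H|[H1 H2]]; auto.
Qed.

Inductive SC {A : Type} (r : A -> A -> Prop) : list A -> list A -> Prop :=
| SC_here : forall x x' l, r x' x -> SC r (x' :: l) (x :: l)
| SC_there : forall x l l', SC r l' l -> SC r (x :: l') (x :: l).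

Lemma SC_wf : forall A (r : A -> A -> Prop), well_founded r -> well_founded (SC r).
Proof.
  intros A r Hr.
  assert (K : forall x, Acc r x -> forall l, Acc (SC r) l -> Acc (SC r) (x :: l)).
  { intros x Hx. induction Hx as [x _ IHx]. intros l Hl. induction Hl as [l Hl' IHl].
    constructor. intros y Hy. inversion Hy; subst.
    - apply IHx; auto. constructor; auto.
    - apply IHl; auto. }
  intros l. induction l as [|x l IH].
  - constructor. intros y Hy. inversion Hy.
  - apply K; auto.
Qed.

Lemma SC_mid : forall A (r : A -> A -> Prop) pre x x' post, r x' x ->
  SC r (pre ++ x' :: post) (pre ++ x :: post).
Proof. intros. induction pre; simpl; constructor; auto. Qed.

Definition Qkey (z : word) : word := rev (skipn (length z - length z / 2) z).
Definition key (x : word) : list word := [Qkey x; Qkey (winv x)].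
Definition elt_lt (x' x : word) : Prop := SC sl (key x') (key x).

Lemma elt_lt_wf : well_founded elt_lt.
Proof. unfold elt_lt. apply (Inverse_Image.wf_inverse_image _ _ (SC sl) key). apply SC_wf, sl_wf. Qed.

Definition msum (U : list word) : nat := fold_right (fun x acc => length x + 1 + acc) 0 U.

Lemma msum_app : forall U V, msum (U ++ V) = msum U + msum V.
Proof. induction U; simpl; intros; auto. rewrite IHU; lia. Qed.

Definition Rm (V U : list word) : Prop := msum V < msum U \/ (msum V = msum U /\ SC elt_lt V U).

Lemma Rm_wf : well_founded Rm.
Proof.
  assert (H : forall n U, msum U = n -> Acc Rm U).
  { induction n as [n IHn] using (well_founded_induction lt_wf).
    intros U HU. pose proof (SC_wf _ _ elt_lt_wf U) as Ha.
    induction Ha as [U _ IHa]. constructor. intros V [HV|[HV1 HV2]].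
    - apply (IHn (msum V)); auto. lia.
    - apply IHa; auto. lia. }
  intros U; apply (H (msum U)); auto.
Qed.

Lemma QK : forall z1 s s', length s = length s' -> 2 * length s <= length (z1 ++ s) ->
  (exists M, Qkey (z1 ++ s) = rev s ++ M /\ Qkey (z1 ++ s') = rev s' ++ M) /\
  Qkey (winv (z1 ++ s')) = Qkey (winv (z1 ++ s)).
Proof.
  intros z1 s s' Hl H. rewrite length_app in H.
  pose proof (Nat.div_mod_eq (length z1 + length s) 2).
  pose proof (Nat.mod_upper_bound (length z1 + length s) 2).
  split.
  - exists (rev (skipn (length z1 + length s - (length z1 + length s) / 2) z1)).
    unfold Qkey. rewrite !length_app, <- Hl. rewrite !skipn_app.
    replace (length z1 + length s - (length z1 + length s) / 2 - length z1) with 0 by lia.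
    simpl. rewrite !rev_app_distr. auto.
  - unfold Qkey. rewrite !winv_app, !length_app, !winv_length, <- Hl. rewrite !skipn_app.
    rewrite !winv_length, <- Hl. f_equal. f_equal.
    rewrite (Nat.add_comm (length s) (length z1)).
    rewrite !skipn_all2; auto; rewrite winv_length; lia.
Qed.


Lemma heq_refl : forall x, heq x x.
Proof. intros; apply rst_refl. Qed.
Lemma heq_sym : forall x y, heq x y -> heq y x.
Proof. intros; apply rst_sym; auto. Qed.
Lemma heq_trans : forall x y z, heq x y -> heq y z -> heq x z.
Proof. intros; eapply rst_trans; eauto. Qed.

Lemma step_ctx : forall u v x y, step x y -> step (u ++ x ++ v) (u ++ y ++ v).
Proof.
  intros u v x y H. destruct H as [u0 v0 a|u0 v0 n].
  - replace (u ++ (u0 ++ v0) ++ v) with ((u ++ u0) ++ (v0 ++ v)) by (rewrite <- !app_assoc; auto).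
    replace (u ++ (u0 ++ [a; flip a] ++ v0) ++ v) with ((u ++ u0) ++ [a; flip a] ++ (v0 ++ v))
      by (rewrite <- !app_assoc; auto).
    apply step_cancel.
  - replace (u ++ (u0 ++ v0) ++ v) with ((u ++ u0) ++ (v0 ++ v)) by (rewrite <- !app_assoc; auto).
    replace (u ++ (u0 ++ relator n ++ v0) ++ v) with ((u ++ u0) ++ relator n ++ (v0 ++ v))
      by (rewrite <- !app_assoc; auto).
    apply step_rel.
Qed.

Lemma heq_ctx : forall u v x y, heq x y -> heq (u ++ x ++ v) (u ++ y ++ v).
Proof.
  intros u v x y H. induction H.
  - apply rst_step. apply step_ctx; auto.
  - apply heq_refl.
  - apply heq_sym; auto.
  - eapply heq_trans; eauto.
Qed.

Lemma heq_app : forall a a' b b', heq a a' -> heq b b' -> heq (a ++ b) (a' ++ b').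
Proof.
  intros. apply heq_trans with (a' ++ b).
  - pose proof (heq_ctx [] b a a' H). simpl in H1. exact H1.
  - pose proof (heq_ctx a' [] b b' H0). rewrite !app_nil_r in H1. exact H1.
Qed.

Lemma heq_cancel : forall x y a, heq (x ++ [a; flip a] ++ y) (x ++ y).
Proof. intros. apply heq_sym. apply rst_step. apply step_cancel. Qed.

Lemma heq_fr : forall w, heq w (fr w).
Proof.
  induction w as [|a w IH]. apply heq_refl.
  apply heq_trans with (a :: fr w).
  - apply (heq_app [a] [a] w (fr w)); auto. apply heq_refl.
  - change (heq (a :: fr w) (credr a (fr w))).
    destruct (fr w) as [|b r]; simpl. apply heq_refl.
    destruct (leq_dec b (flip a)). subst b.
    + apply (heq_cancel [] r a).
    + apply heq_refl.
Qed.

Lemma heq_winv_r : forall x, heq (x ++ winv x) [].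
Proof.
  induction x as [|a x IH]. apply heq_refl.
  rewrite winv_cons. simpl. rewrite app_assoc.
  apply heq_trans with ([a] ++ [] ++ [flip a]).
  - apply (heq_ctx [a] [flip a]). exact IH.
  - apply (heq_cancel [] [] a).
Qed.

Lemma heq_winv_l : forall x, heq (winv x ++ x) [].
Proof. intros. rewrite <- (winv_winv x) at 2. apply heq_winv_r. Qed.

Lemma heq_inv : forall x y, heq x y -> heq (winv x) (winv y).
Proof.
  intros x y H.
  apply heq_trans with (winv x ++ y ++ winv y).
  - rewrite <- (app_nil_r (winv x)) at 1. apply heq_app. apply heq_refl. apply heq_sym, heq_winv_r.
  - apply heq_trans with (winv x ++ x ++ winv y).
    + apply heq_app. apply heq_refl. apply heq_app; [apply heq_sym; auto|apply heq_refl].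
    + rewrite app_assoc. rewrite <- (app_nil_l (winv y)) at 2. apply heq_app. apply heq_winv_l.
      apply heq_refl.
Qed.

Lemma heq_rel_l : forall p q, heq (p ++ q) [] -> heq p (winv q).
Proof.
  intros p q H. apply heq_trans with ((p ++ q) ++ winv q).
  - rewrite <- app_assoc. rewrite <- (app_nil_r p) at 1. apply heq_app. apply heq_refl.
    apply heq_sym, heq_winv_r.
  - rewrite <- (app_nil_l (winv q)) at 2. apply heq_app; auto. apply heq_refl.
Qed.

Lemma heq_rel_r : forall p q, heq (p ++ q) [] -> heq q (winv p).
Proof.
  intros p q H. apply heq_trans with (winv p ++ (p ++ q)).
  - rewrite app_assoc. rewrite <- (app_nil_l q) at 1. apply heq_app. apply heq_sym, heq_winv_l.
    apply heq_refl.
  - rewrite <- (app_nil_r (winv p)) at 2. apply heq_app; auto. apply heq_refl.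
Qed.

Lemma relator_eq : forall n, relator n =
  [(Y n, false); (X (n+1), true); (Y (n+1), false); (X (n+1), false)].
Proof. reflexivity. Qed.

Lemma heq_relator : forall n, heq (relator n) [].
Proof. intros. apply heq_sym. apply rst_step. apply (step_rel [] [] n). Qed.

Lemma rel_neg : forall n, heq [(Y n, false)]
  ([(X (n+1), true)] ++ winv [(Y (n+1), false)] ++ [(X (n+1), false)]).
Proof.
  intros. pose proof (heq_relator n) as H. rewrite relator_eq in H.
  apply (heq_rel_l [(Y n, false)] [(X (n+1), true); (Y (n+1), false); (X (n+1), false)]) in H.
  exact H.
Qed.

Lemma rel_pos : forall n, heq [(Y (n+1), false)]
  ([(X (n+1), false)] ++ winv [(Y n, false)] ++ [(X (n+1), true)]).
Proof.
  intros. pose proof (heq_relator n) as H. rewrite relator_eq in H.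
  apply (heq_rel_r [(Y n, false); (X (n+1), true)] [(Y (n+1), false); (X (n+1), false)]) in H.
  apply heq_trans with ([(Y (n+1), false)] ++ [(X (n+1), false); (X (n+1), true)]).
  - rewrite <- (app_nil_r [(Y (n+1), false)]) at 1.
    apply heq_sym. apply (heq_cancel [(Y (n+1), false)] [] (X (n+1), false)).
  - replace ([(Y (n+1), false)] ++ [(X (n+1), false); (X (n+1), true)]) with
      ([(Y (n+1), false); (X (n+1), false)] ++ [(X (n+1), true)]) by reflexivity.
    change ([(X (n+1), false)] ++ winv [(Y n, false)] ++ [(X (n+1), true)]) with
      (winv [(Y n, false); (X (n+1), true)] ++ [(X (n+1), true)]).
    apply heq_app; [exact H|apply heq_refl].
Qed.

Fixpoint ypos (k : nat) : word :=
  match k with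
  | O => [(Y 0%Z, false)]
  | S k' => [(X (Z.of_nat (S k')), false)] ++ winv (ypos k') ++ [(X (Z.of_nat (S k')), true)]
  end.

Fixpoint yneg (k : nat) : word :=
  match k with
  | O => [(Y 0%Z, false)]
  | S k' => [(X (- Z.of_nat k'), true)] ++ winv (yneg k') ++ [(X (- Z.of_nat k'), false)]
  end.

Definition yexp (n : Z) : word :=
  match n with
  | Z0 => ypos 0
  | Zpos p => ypos (Pos.to_nat p)
  | Zneg p => yneg (Pos.to_nat p)
  end.

Lemma yexp_pos : forall k, yexp (Z.of_nat k) = ypos k.
Proof. intros [|k]; auto. simpl. rewrite SuccNat2Pos.id_succ. reflexivity. Qed.

Lemma yexp_neg : forall k, yexp (- Z.of_nat k) = yneg k.
Proof. intros [|k]; auto. simpl. rewrite SuccNat2Pos.id_succ. reflexivity. Qed.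

Lemma ypos_heq : forall k, heq [(Y (Z.of_nat k), false)] (ypos k).
Proof.
  induction k as [|k IH]. apply heq_refl.
  pose proof (rel_pos (Z.of_nat k)) as H.
  replace (Z.of_nat k + 1)%Z with (Z.of_nat (S k)) in H by lia.
  eapply heq_trans; [exact H|].
  change (ypos (S k)) with ([(X (Z.of_nat (S k)), false)] ++ winv (ypos k) ++ [(X (Z.of_nat (S k)), true)]).
  apply heq_app; [apply heq_refl|]. apply heq_app; [|apply heq_refl]. apply heq_inv; auto.
Qed.

Lemma yneg_heq : forall k, heq [(Y (- Z.of_nat k), false)] (yneg k).
Proof.
  induction k as [|k IH]. apply heq_refl.
  pose proof (rel_neg (- Z.of_nat (S k))) as H.
  replace (- Z.of_nat (S k) + 1)%Z with (- Z.of_nat k)%Z in H by lia.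
  eapply heq_trans; [exact H|].
  change (yneg (S k)) with ([(X (- Z.of_nat k), true)] ++ winv (yneg k) ++ [(X (- Z.of_nat k), false)]).
  apply heq_app; [apply heq_refl|]. apply heq_app; [|apply heq_refl]. apply heq_inv; auto.
Qed.

Lemma yexp_heq : forall n, heq [(Y n, false)] (yexp n).
Proof.
  intros n. destruct (Z_le_gt_dec 0 n).
  - replace n with (Z.of_nat (Z.to_nat n)) by lia. rewrite yexp_pos. apply ypos_heq.
  - replace n with (- Z.of_nat (Z.to_nat (- n)))%Z by lia. rewrite yexp_neg. apply yneg_heq.
Qed.

Lemma yexp_succ : forall n, (0 <= n)%Z ->
  yexp (n+1) = [(X (n+1), false)] ++ winv (yexp n) ++ [(X (n+1), true)].
Proof.
  intros n H. replace n with (Z.of_nat (Z.to_nat n)) by lia.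
  replace (Z.of_nat (Z.to_nat n) + 1)%Z with (Z.of_nat (S (Z.to_nat n))) by lia.
  rewrite !yexp_pos. reflexivity.
Qed.

Lemma yexp_pred : forall n, (n < 0)%Z ->
  yexp n = [(X (n+1), true)] ++ winv (yexp (n+1)) ++ [(X (n+1), false)].
Proof.
  intros n H. replace n with (- Z.of_nat (S (Z.to_nat (- n - 1))))%Z by lia.
  replace (- Z.of_nat (S (Z.to_nat (- n - 1))) + 1)%Z with (- Z.of_nat (Z.to_nat (- n - 1)))%Z by lia.
  rewrite !yexp_neg. reflexivity.
Qed.


Definition phil (a : letter) : word :=
  match fst a with
  | X _ => [a]
  | Y n => if snd a then winv (yexp n) else yexp n
  end.

Definition phi (w : word) : word := flat_map phil w.

Lemma phi_app : forall u v, phi (u ++ v) = phi u ++ phi v.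
Proof. intros; unfold phi; apply flat_map_app. Qed.

Lemma phil_flip : forall a, phil (flip a) = winv (phil a).
Proof.
  intros [[m|n] e]; unfold phil, flip; simpl. reflexivity.
  destruct e; simpl; rewrite ?winv_winv; reflexivity.
Qed.

Lemma phi_winv : forall w, phi (winv w) = winv (phi w).
Proof.
  induction w as [|a w IH]; auto. rewrite winv_cons, phi_app, IH.
  change (phi (a :: w)) with (phil a ++ phi w). rewrite winv_app.
  unfold phi at 2. simpl. rewrite app_nil_r, phil_flip. reflexivity.
Qed.

Lemma heq_phil : forall a, heq [a] (phil a).
Proof.
  intros [[m|n] e]; unfold phil; simpl. apply heq_refl.
  destruct e. 
  - change [(Y n, true)] with (winv [(Y n, false)]). apply heq_inv, yexp_heq.
  - apply yexp_heq.
Qed.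

Lemma heq_phi : forall w, heq w (phi w).
Proof.
  induction w as [|a w IH]. apply heq_refl.
  change (a :: w) with ([a] ++ w). change (phi (a :: w)) with (phil a ++ phi w).
  apply heq_app; auto. apply heq_phil.
Qed.

Lemma fr_XiX : forall m, fr [(X m, true); (X m, false)] = [].
Proof. intros. exact (fr_winv_l [(X m, false)]). Qed.
Lemma fr_XXi : forall m, fr [(X m, false); (X m, true)] = [].
Proof. intros. exact (fr_winv_r [(X m, false)]). Qed.

Lemma phi_relator : forall n, fr (phi (relator n)) = [].
Proof.
  intros n. rewrite relator_eq. unfold phi. simpl flat_map. unfold phil; simpl.
  assert (Eq1 : forall (E : word) m, E ++ (X m, true) :: ([(X m, false)] ++ winv E ++ [(X m, true)]) ++ [(X m, false)]
     = E ++ [(X m, true); (X m, false)] ++ (winv E ++ [(X m, true); (X m, false)])).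
  { intros. simpl. rewrite <- !app_assoc. reflexivity. }
  assert (Eq2 : forall (F : word) m, ([(X m, true)] ++ winv F ++ [(X m, false)]) ++ (X m, true) :: F ++ [(X m, false)]
     = [(X m, true)] ++ (winv F ++ [(X m, false); (X m, true)] ++ (F ++ [(X m, false)]))).
  { intros. simpl. rewrite <- !app_assoc. reflexivity. }
  destruct (Z_le_gt_dec 0 n) as [H|H].
  - rewrite (yexp_succ n H), Eq1.
    rewrite fr_mid by apply fr_XiX. rewrite app_assoc, fr_mid_r by apply fr_XiX.
    apply fr_winv_r.
  - rewrite (yexp_pred n) by lia. rewrite Eq2.
    rewrite app_assoc, (fr_mid [(X (n+1), false); (X (n+1), true)]) by apply fr_XXi.
    rewrite <- app_assoc, (app_assoc (winv (yexp (n+1)))).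
    rewrite (fr_mid (winv (yexp (n+1)) ++ yexp (n+1))) by apply fr_winv_l. apply fr_XiX.
Qed.

Lemma step_phi : forall x y, step x y -> fr (phi x) = fr (phi y).
Proof.
  intros x y [u v a|u v n].
  - rewrite !phi_app. change (phi [a; flip a]) with (phil a ++ phil (flip a) ++ []).
    rewrite app_nil_r, phil_flip, (fr_mid (phil a ++ winv (phil a))); auto. apply fr_winv_r.
  - rewrite !phi_app, (fr_mid (phi (relator n))); auto. apply phi_relator.
Qed.

Lemma heq_phi_fr : forall x y, heq x y -> fr (phi x) = fr (phi y).
Proof.
  intros x y H. induction H; auto. apply step_phi; auto. congruence.
Qed.

Lemma heq_iff : forall x y, heq x y <-> fr (phi x) = fr (phi y).
Proof.
  split. apply heq_phi_fr. intros H.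
  apply heq_trans with (phi x). apply heq_phi.
  apply heq_trans with (fr (phi x)). apply heq_fr. rewrite H.
  apply heq_sym. apply heq_trans with (phi y). apply heq_phi. apply heq_fr.
Qed.

Definition cleanl (a : letter) : Prop := match fst a with X _ => True | Y n => n = 0%Z end.
Definition clean (w : word) : Prop := forall a, In a w -> cleanl a.

Lemma clean_app : forall u v, clean u -> clean v -> clean (u ++ v).
Proof. intros u v Hu Hv a Ha. apply in_app_or in Ha. destruct Ha; auto. Qed.

Lemma clean_winv : forall u, clean u -> clean (winv u).
Proof.
  intros u H a Ha. unfold winv in Ha. apply in_rev, in_map_iff in Ha.
  destruct Ha as [b [E Hb]]. subst. apply H in Hb. destruct b as [[m|n] e]; exact Hb.
Qed.

Lemma clean_fr : forall u, clean u -> clean (fr u).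
Proof. intros u H a Ha. apply H, fr_in; auto. Qed.

Lemma clean_ypos : forall k, clean (ypos k).
Proof.
  induction k; cbn [ypos]. intros a [<-|[]]; reflexivity.
  apply clean_app. intros a [<-|[]]; exact I.
  apply clean_app. apply clean_winv; auto. intros a [<-|[]]; exact I.
Qed.

Lemma clean_yneg : forall k, clean (yneg k).
Proof.
  induction k; cbn [yneg]. intros a [<-|[]]; reflexivity.
  apply clean_app. intros a [<-|[]]; exact I.
  apply clean_app. apply clean_winv; auto. intros a [<-|[]]; exact I.
Qed.

Lemma clean_yexp : forall n, clean (yexp n).
Proof. intros [|p|p]; unfold yexp; auto using clean_ypos, clean_yneg. Qed.

Lemma clean_phi : forall w, clean (phi w).
Proof.
  induction w as [|a w IH]. intros b [].
  change (phi (a :: w)) with (phil a ++ phi w). apply clean_app; auto.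
  destruct a as [[m|n] e]; unfold phil; simpl. intros b [<-|[]]; exact I.
  destruct e; auto using clean_winv, clean_yexp.
Qed.

Lemma phi_clean : forall w, clean w -> phi w = w.
Proof.
  induction w as [|a w IH]; intros H; auto.
  change (phi (a :: w)) with (phil a ++ phi w). rewrite IH by (intros b Hb; apply H; right; auto).
  assert (Ha : cleanl a) by (apply H; left; auto).
  destruct a as [[m|n] e]; unfold phil, cleanl in *; simpl in *; auto.
  subst n. destruct e; reflexivity.
Qed.

Lemma evalw_app : forall {I} (b : I -> word) ws1 ws2, evalw b (ws1 ++ ws2) = evalw b ws1 ++ evalw b ws2.
Proof.
  intros I b ws1 ws2. induction ws1 as [|[i e] ws1 IH]; simpl; auto. rewrite IH, app_assoc; auto.
Qed.

Lemma evalw_winv : forall ws : list (word * bool),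
  winv (evalw (fun u => u) ws) = evalw (fun u => u) (rev (map (fun p => (fst p, negb (snd p))) ws)).
Proof.
  induction ws as [|[x e] ws IH]; simpl; auto.
  rewrite winv_app, IH, evalw_app. simpl. rewrite app_nil_r.
  destruct e; simpl; rewrite ?winv_winv; auto.
Qed.

Lemma gs_heq : forall V w w', heq w w' -> gen_sub V w' -> gen_sub V w.
Proof. intros V w w' H [ws [H1 H2]]. exists ws; split; auto. eapply heq_trans; eauto. Qed.

Lemma gs_in : forall V x, In x V -> gen_sub V x.
Proof. intros V x H. exists [(x, false)]. split. intros p [<-|[]]; auto. simpl. rewrite app_nil_r. apply heq_refl. Qed.

Lemma gs_nil : forall V, gen_sub V [].
Proof. intros V. exists []. split. intros p []. apply heq_refl. Qed.

Lemma gs_app : forall V x y, gen_sub V x -> gen_sub V y -> gen_sub V (x ++ y).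
Proof.
  intros V x y [ws1 [H1 H2]] [ws2 [H3 H4]]. exists (ws1 ++ ws2). split.
  intros p Hp. apply in_app_or in Hp. destruct Hp; auto.
  rewrite evalw_app. apply heq_app; auto.
Qed.

Lemma gs_inv : forall V x, gen_sub V x -> gen_sub V (winv x).
Proof.
  intros V x [ws [H1 H2]]. exists (rev (map (fun p => (fst p, negb (snd p))) ws)). split.
  - intros p Hp. apply in_rev, in_map_iff in Hp. destruct Hp as [q [<- Hq]]. simpl. auto.
  - rewrite <- evalw_winv. apply heq_inv; auto.
Qed.

Lemma gs_trans : forall U V w, (forall x, In x U -> gen_sub V x) -> gen_sub U w -> gen_sub V w.
Proof.
  intros U V w HUV [ws [H1 H2]]. apply (gs_heq V w _ H2). clear H2 w.
  induction ws as [|[x e] ws IH]; simpl. apply gs_nil.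
  apply gs_app.
  - assert (gen_sub V x) by (apply HUV, (H1 (x, e)); left; auto).
    destruct e; auto using gs_inv.
  - apply IH. intros; apply H1; right; auto.
Qed.


Definition AR2 (U : list word) : Prop := forall x, In x U -> isred x /\ clean x.
Definition sameSpan (U V : list word) : Prop :=
  (forall x, In x U -> gen_sub V x) /\ (forall x, In x V -> gen_sub U x).

Lemma sameSpan_trans : forall U V W, sameSpan U V -> sameSpan V W -> sameSpan U W.
Proof.
  intros U V W [H1 H2] [H3 H4]. split; intros x Hx.
  - apply (gs_trans V W x H3). auto.
  - apply (gs_trans V U x H2). auto.
Qed.

Lemma in_mid_ne : forall (pre post : list word) x y, In y (pre ++ x :: post) -> y <> x -> In y (pre ++ post).
Proof.
  intros pre post x y H Hne. apply in_app_or in H. apply in_or_app.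
  destruct H as [H|[H|H]]; auto. congruence.
Qed.

Lemma in_mid_sub : forall (pre post : list word) x y, In y (pre ++ post) -> In y (pre ++ x :: post).
Proof. intros. apply in_app_or in H. apply in_or_app. destruct H; simpl; auto. Qed.

Lemma rem_span : forall pre x post, gen_sub (pre ++ post) x -> sameSpan (pre ++ x :: post) (pre ++ post).
Proof.
  intros pre x post H. split; intros y Hy.
  - destruct (classic (y = x)) as [->|Hne]; auto. apply gs_in. eapply in_mid_ne; eauto.
  - apply gs_in. apply in_mid_sub; auto.
Qed.

Lemma move_span : forall pre x x' post z, gen_sub (pre ++ post) z ->
  (heq x' (x ++ z) \/ heq x' (z ++ x)) -> sameSpan (pre ++ x :: post) (pre ++ x' :: post).
Proof.
  intros pre x x' post z Hz Hh.
  assert (HzV : gen_sub (pre ++ x' :: post) z).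
  { apply (gs_trans (pre ++ post)); auto. intros y Hy. apply gs_in, in_mid_sub; auto. }
  assert (HzU : gen_sub (pre ++ x :: post) z).
  { apply (gs_trans (pre ++ post)); auto. intros y Hy. apply gs_in, in_mid_sub; auto. }
  assert (Hx'V : gen_sub (pre ++ x' :: post) x') by (apply gs_in, in_or_app; simpl; auto).
  assert (HxU : gen_sub (pre ++ x :: post) x) by (apply gs_in, in_or_app; simpl; auto).
  split; intros y Hy.
  - destruct (classic (y = x)) as [->|Hne].
    + destruct Hh as [Hh|Hh].
      * apply (gs_heq _ _ (x' ++ winv z)). 
        apply heq_trans with (x ++ z ++ winv z).
        { rewrite <- (app_nil_r x) at 1. apply heq_app. apply heq_refl. apply heq_sym, heq_winv_r. }
        rewrite app_assoc. apply heq_app. apply heq_sym; auto. apply heq_refl.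
        apply gs_app; auto. apply gs_inv; auto.
      * apply (gs_heq _ _ (winv z ++ x')).
        apply heq_trans with ((winv z ++ z) ++ x).
        { rewrite <- (app_nil_l x) at 1. apply heq_app. apply heq_sym, heq_winv_l. apply heq_refl. }
        rewrite <- app_assoc. apply heq_app. apply heq_refl. apply heq_sym; auto.
        apply gs_app; auto. apply gs_inv; auto.
    + apply gs_in. apply in_mid_sub. eapply in_mid_ne; eauto.
  - destruct (classic (y = x')) as [->|Hne].
    + destruct Hh as [Hh|Hh]; eapply gs_heq; eauto; apply gs_app; auto.
    + apply gs_in. apply in_mid_sub. eapply in_mid_ne; eauto.
Qed.

Lemma msum_mid : forall pre x post, msum (pre ++ x :: post) = msum pre + (length x + 1) + msum post.
Proof. intros. rewrite msum_app. simpl. lia. Qed.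

Lemma pm_elem : forall U u, pm U u -> exists x, In x U /\ (u = x \/ u = winv x).
Proof.
  intros U u [H|H]. exists u; auto. exists (winv u). split; auto. right. rewrite winv_winv; auto.
Qed.

Lemma pm_winv : forall U u, pm U u -> pm U (winv u).
Proof. intros U u [H|H]; [right; rewrite winv_winv|left]; auto. Qed.

Lemma pm_of : forall U x u, In x U -> (u = x \/ u = winv x) -> pm U u.
Proof. intros U x u H [->| ->]. left; auto. right; rewrite winv_winv; auto. Qed.

Lemma same_elem : forall x u v, (u = x \/ u = winv x) -> (v = x \/ v = winv x) -> v <> winv u -> v = u.
Proof.
  intros x u v [->| ->] [->| ->] H; auto; exfalso; apply H; rewrite ?winv_winv; auto.
Qed.

Lemma gs_z : forall V y z, In y V -> (z = y \/ z = winv y) -> gen_sub V z.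
Proof. intros V y z H [->| ->]. apply gs_in; auto. apply gs_inv, gs_in; auto. Qed.

Lemma AR2_pm : forall U u, AR2 U -> pm U u -> isred u /\ clean u.
Proof.
  intros U u HA Hp. destruct (pm_elem U u Hp) as [x [Hx [->| ->]]]; apply HA in Hx; auto.
  destruct Hx; split; [apply isred_winv|apply clean_winv]; auto.
Qed.

Lemma AR2_mid : forall pre x x' post, AR2 (pre ++ x :: post) -> isred x' -> clean x' ->
  AR2 (pre ++ x' :: post).
Proof.
  intros pre x x' post HA H1 H2 y Hy. destruct (classic (y = x')) as [->|Hne]; auto.
  apply HA. apply in_mid_sub. eapply in_mid_ne; eauto.
Qed.

Lemma AR2_rem : forall pre x post, AR2 (pre ++ x :: post) -> AR2 (pre ++ post).
Proof. intros pre x post HA y Hy. apply HA, in_mid_sub; auto. Qed.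

Lemma key_lt : forall x x' z z', Qkey (winv z') = Qkey (winv z) -> sl (Qkey z') (Qkey z) ->
  (x = z /\ x' = z') \/ (x = winv z /\ x' = winv z') -> elt_lt x' x.
Proof.
  intros x x' z z' H1 H2 [[-> ->]|[-> ->]]; unfold elt_lt, key.
  - rewrite H1. apply SC_here; auto.
  - rewrite !winv_winv, H1. apply SC_there, SC_here; auto.
Qed.


Lemma moveC : forall U u v, AR2 U -> (forall x, In x U -> x <> []) ->
  pm U u -> pm U v -> v <> winv u -> length v < 2 * cc u v ->
  exists U', Rm U' U /\ AR2 U' /\ sameSpan U U'.
Proof.
  intros U u v HA HnA Hu Hv Hne Hlt.
  destruct (pm_elem U u Hu) as [x [Hx Hux]].
  destruct (pm_elem U v Hv) as [y [Hy Hvy]].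
  destruct (AR2_pm U u HA Hu) as [Ru Cu]. destruct (AR2_pm U v HA Hv) as [Rv Cv].
  destruct (classic (y = x)) as [Exy|Nxy].
  { subst y. pose proof (same_elem x u v Hux Hvy Hne). subst v.
    assert (u <> []) by (destruct Hux as [->| ->]; [apply HnA; auto|intro E; apply (HnA x Hx);
      rewrite <- (winv_winv x), E; reflexivity]).
    pose proof (L_self u Ru H). exfalso; lia. }
  destruct (in_split x U Hx) as [pre [post EU]].
  assert (Hy' : In y (pre ++ post)) by (eapply in_mid_ne; [rewrite <- EU|]; eauto).
  destruct (CU u v Ru Rv) as [u1 [s [v1 [E1 [E2 [E3 [E4 E5]]]]]]].
  assert (Lu' : length (u1 ++ v1) < length u).
  { assert (length u = length u1 + length s) by (rewrite E1, length_app; auto).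
    assert (length v = length s + length v1) by (rewrite E2, length_app, winv_length; auto).
    rewrite length_app. lia. }
  assert (Cu' : clean (u1 ++ v1)) by (rewrite <- E4; apply clean_fr, clean_app; auto).
  assert (Hh : heq (u1 ++ v1) (u ++ v)) by (rewrite <- E4; apply heq_sym, heq_fr).
  destruct Hux as [Eu|Eu].
  - exists (pre ++ (u1 ++ v1) :: post). subst U. split; [|split].
    + left. rewrite !msum_mid. subst u. lia.
    + apply AR2_mid with x; auto.
    + apply (move_span pre x _ post v). apply gs_z with y; auto. subst u; auto.
  - exists (pre ++ winv (u1 ++ v1) :: post). subst U. split; [|split].
    + left. rewrite !msum_mid, winv_length. assert (length u = length x) by (subst u; apply winv_length). lia.
    + apply AR2_mid with x; auto. apply isred_winv; auto. apply clean_winv; auto.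
    + apply (move_span pre x _ post (winv v)).
      * apply gs_inv, gs_z with y; auto.
      * right. apply heq_trans with (winv (u ++ v)). apply heq_inv; auto.
        rewrite winv_app, Eu, winv_winv. apply heq_refl.
Qed.

Lemma moveD : forall U u v w, AR2 U -> (forall x, In x U -> x <> []) ->
  (forall u v, pm U u -> pm U v -> v <> winv u -> 2 * cc u v <= length u /\ 2 * cc u v <= length v) ->
  pm U u -> pm U v -> pm U w -> v <> winv u -> w <> winv v -> length v <= cc u v + cc v w ->
  exists U', Rm U' U /\ AR2 U' /\ sameSpan U U'.
Proof.
  intros U u v w HA HnA HC1 Hu Hv Hw Hne1 Hne2 Hle.
  assert (Hne : forall z, pm U z -> z <> []).
  { intros z Hz. destruct (pm_elem U z Hz) as [x [Hx [->| ->]]]. apply HnA; auto.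
    intro E. apply (HnA x Hx). rewrite <- (winv_winv x), E. reflexivity. }
  destruct (AR2_pm U u HA Hu) as [Ru Cu]. destruct (AR2_pm U v HA Hv) as [Rv Cv].
  destruct (AR2_pm U w HA Hw) as [Rw Cw].
  destruct (HC1 u v Hu Hv Hne1) as [K1 K2]. destruct (HC1 v w Hv Hw Hne2) as [K3 K4].
  destruct (CU u v Ru Rv) as [u1 [s [v1 [E1 [E2 [E3 [E4 E5]]]]]]].
  destruct (CU v w Rv Rw) as [v2 [s2 [w1 [F1 [F2 [F3 [F4 F5]]]]]]].
  assert (Lv1 : length v = length s + length v1) by (rewrite E2, length_app, winv_length; auto).
  assert (Lv2 : length v = length v2 + length s2) by (rewrite F1, length_app; auto).
  destruct (app_len_eq (winv s) v1 v2 s2) as [G1 G2]. rewrite <- E2, <- F1; auto.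
  rewrite winv_length. lia. subst v1.
  assert (Nss : s <> s2).
  { intro Es. subst s2. apply (Hne v Hv). rewrite E2 in Rv. apply winv_s_s_not_red in Rv.
    subst s. rewrite E2. reflexivity. }
  assert (Nrr : rev s <> rev s2) by (intro E; apply Nss; rewrite <- (rev_involutive s), E, rev_involutive; auto).
  destruct (lexlt_tri (rev s2) (rev s)) as [Lt|Lt]; [rewrite !length_rev; lia|auto|..].
  -
    destruct (pm_elem U u Hu) as [x [Hx Hux]].
    destruct (pm_elem U v Hv) as [y [Hy Hvy]].
    destruct (classic (y = x)) as [Exy|Nxy].
    { subst y. pose proof (same_elem x u v Hux Hvy Hne1) as Evu.
      rewrite Evu in Hle, K2, K3.
      pose proof (L_self u Ru (Hne u Hu)). exfalso. lia. }
    destruct (in_split x U Hx) as [pre [post EU]].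
    assert (Hy' : In y (pre ++ post)) by (eapply in_mid_ne; [rewrite <- EU|]; eauto).
    assert (Hh : heq (u1 ++ s2) (u ++ v)) by (rewrite <- E4; apply heq_sym, heq_fr).
    assert (Cu' : clean (u1 ++ s2)) by (rewrite <- E4; apply clean_fr, clean_app; auto).
    assert (Ru' : isred (u1 ++ s2)) by (rewrite <- E4; apply fr_red).
    assert (Hs : length s = length s2) by lia.
    destruct (QK u1 s s2 Hs) as [[M [Q1 Q2]] Q3]. rewrite <- E1; lia.
    rewrite <- E1 in Q1, Q3.
    assert (Hsl : sl (Qkey (u1 ++ s2)) (Qkey u)).
    { rewrite Q1, Q2. split. rewrite !length_app, !length_rev; lia. apply lexlt_app; auto. }
    assert (Lu : length (u1 ++ s2) = length u) by (rewrite E1, !length_app; lia).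
    destruct Hux as [Eu|Eu].
    + exists (pre ++ (u1 ++ s2) :: post). subst U. split; [|split].
      * right. split. rewrite !msum_mid, Lu, Eu. lia.
        apply SC_mid. apply (key_lt x (u1 ++ s2) u (u1 ++ s2)); auto.
      * apply AR2_mid with x; auto.
      * apply (move_span pre x _ post v). apply gs_z with y; auto. left; rewrite <- Eu; auto.
    + exists (pre ++ winv (u1 ++ s2) :: post). subst U. split; [|split].
      * right. split. rewrite !msum_mid, winv_length. assert (length u = length x) by (rewrite Eu; apply winv_length). lia.
        apply SC_mid. apply (key_lt x (winv (u1 ++ s2)) u (u1 ++ s2)); auto.
        right; split; auto. rewrite Eu, winv_winv; auto.
      * apply AR2_mid with x; auto. apply isred_winv; auto. apply clean_winv; auto.
      * apply (move_span pre x _ post (winv v)).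
        -- apply gs_inv, gs_z with y; auto.
        -- right. apply heq_trans with (winv (u ++ v)). apply heq_inv; auto.
           rewrite winv_app, Eu, winv_winv. apply heq_refl.
  -
    destruct (pm_elem U w Hw) as [x [Hx Hwx]].
    destruct (pm_elem U v Hv) as [y [Hy Hvy]].
    destruct (classic (y = x)) as [Exy|Nxy].
    { subst y. assert (Hne3 : v <> winv w) by (intro E; apply Hne2; rewrite E, winv_winv; auto).
      pose proof (same_elem x w v Hwx Hvy Hne3) as Evw.
      rewrite Evw in Hle, K2, K3.
      pose proof (L_self w Rw (Hne w Hw)). exfalso. lia. }
    destruct (in_split x U Hx) as [pre [post EU]].
    assert (Hy' : In y (pre ++ post)) by (eapply in_mid_ne; [rewrite <- EU|]; eauto).
    assert (Ew' : v2 ++ w1 = winv (winv w1 ++ s)).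
    { rewrite winv_app, winv_winv, G1. reflexivity. }
    assert (Ez : winv w = winv w1 ++ s2) by (rewrite F2, winv_app, winv_winv; auto).
    assert (Hh : heq (v2 ++ w1) (v ++ w)) by (rewrite <- F4; apply heq_sym, heq_fr).
    assert (Cw' : clean (v2 ++ w1)) by (rewrite <- F4; apply clean_fr, clean_app; auto).
    assert (Rw' : isred (v2 ++ w1)) by (rewrite <- F4; apply fr_red).
    assert (Hs : length s2 = length s) by lia.
    destruct (QK (winv w1) s2 s Hs) as [[M [Q1 Q2]] Q3].
    rewrite <- Ez, winv_length; lia.
    rewrite <- Ez in Q1, Q3.
    assert (Hsl : sl (Qkey (winv w1 ++ s)) (Qkey (winv w))).
    { rewrite Q1, Q2. split. rewrite !length_app, !length_rev; lia. apply lexlt_app; auto. }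
    assert (Lw : length (v2 ++ w1) = length w) by (rewrite F2, !length_app, winv_length; lia).
    destruct Hwx as [Ew|Ew].
    + exists (pre ++ (v2 ++ w1) :: post). subst U. split; [|split].
      * right. split. rewrite !msum_mid, Lw, Ew. lia.
        apply SC_mid. apply (key_lt x (v2 ++ w1) (winv w) (winv w1 ++ s)); auto.
        right. rewrite winv_winv, Ew'. auto.
      * apply AR2_mid with x; auto.
      * apply (move_span pre x _ post v). apply gs_z with y; auto. right; rewrite <- Ew; auto.
    + exists (pre ++ (winv w1 ++ s) :: post). subst U. split; [|split].
      * right. split. rewrite !msum_mid.
        assert (length (winv w1 ++ s) = length (v2 ++ w1)) by (rewrite Ew', winv_length; auto).
        assert (length w = length x) by (rewrite Ew; apply winv_length). lia.
        apply SC_mid. apply (key_lt x (winv w1 ++ s) (winv w) (winv w1 ++ s)); auto.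
        left. rewrite Ew, winv_winv. auto.
      * apply AR2_mid with x; auto.
        rewrite <- (winv_winv (winv w1 ++ s)), <- Ew'. apply isred_winv; auto.
        rewrite <- (winv_winv (winv w1 ++ s)), <- Ew'. apply clean_winv; auto.
      * apply (move_span pre x _ post (winv v)).
        -- apply gs_inv, gs_z with y; auto.
        -- left. rewrite <- (winv_winv (winv w1 ++ s)), <- Ew'.
           apply heq_trans with (winv (v ++ w)). apply heq_inv; auto.
           rewrite winv_app, Ew, winv_winv. apply heq_refl.
Qed.


Lemma sameSpan_refl : forall U, sameSpan U U.
Proof. intros U; split; intros; apply gs_in; auto. Qed.

Theorem reduce : forall U, AR2 U -> exists V, AR2 V /\ AR V /\ NR V /\ sameSpan U V.
Proof.
  intros U. induction U as [U IH] using (well_founded_induction Rm_wf). intros HA.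
  assert (Step : forall U', Rm U' U -> AR2 U' -> sameSpan U U' ->
            exists V, AR2 V /\ AR V /\ NR V /\ sameSpan U V).
  { intros U' HR HA' HS. destruct (IH U' HR HA') as [V [H1 [H2 [H3 H4]]]].
    exists V. split; [auto|split; [auto|split; [auto|eapply sameSpan_trans; eauto]]]. }
  destruct (classic (exists pre post, U = pre ++ [] :: post)) as [[pre [post EU]]|HnA].
  { subst U. apply (Step (pre ++ post)).
    - left. rewrite msum_mid, msum_app. lia.
    - eapply AR2_rem; eauto.
    - apply rem_span, gs_nil. }
  assert (HnA' : forall x, In x U -> x <> []).
  { intros x Hx E. subst x. apply HnA. apply in_split; auto. }
  destruct (classic (exists pre x post, U = pre ++ x :: post /\
              (In x (pre ++ post) \/ In (winv x) (pre ++ post)))) as [[pre [x [post [EU Hd]]]]|HnB].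
  { subst U. apply (Step (pre ++ post)).
    - left. rewrite msum_mid, msum_app. lia.
    - eapply AR2_rem; eauto.
    - apply rem_span. destruct Hd as [Hd|Hd]. apply gs_in; auto.
      rewrite <- (winv_winv x). apply gs_inv, gs_in; auto. }
  destruct (classic (exists u v, pm U u /\ pm U v /\ v <> winv u /\
              (length u < 2 * cc u v \/ length v < 2 * cc u v))) as [[u [v [Hu [Hv [Hne Hl]]]]]|HnC].
  { destruct Hl as [Hl|Hl].
    - destruct (moveC U (winv v) (winv u) HA HnA' (pm_winv U v Hv) (pm_winv U u Hu)) as [U' [H1 [H2 H3]]].
      + intro E. apply Hne. rewrite <- (winv_winv v), E, winv_winv. reflexivity.
      + rewrite cc_sym, winv_length. exact Hl.
      + apply (Step U'); auto.
    - destruct (moveC U u v HA HnA' Hu Hv Hne Hl) as [U' [H1 [H2 H3]]].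
      apply (Step U'); auto. }
  assert (HC1 : forall u v, pm U u -> pm U v -> v <> winv u ->
            2 * cc u v <= length u /\ 2 * cc u v <= length v).
  { intros u v Hu Hv Hne. destruct (Nat.le_gt_cases (2 * cc u v) (length u));
    destruct (Nat.le_gt_cases (2 * cc u v) (length v)); auto;
    exfalso; apply HnC; exists u, v; repeat split; auto. }
  destruct (classic (exists u v w, pm U u /\ pm U v /\ pm U w /\ v <> winv u /\ w <> winv v /\
              length v <= cc u v + cc v w)) as [[u [v [w [Hu [Hv [Hw [H1 [H2 H3]]]]]]]]|HnD].
  { destruct (moveD U u v w HA HnA' HC1 Hu Hv Hw H1 H2 H3) as [U' [K1 [K2 K3]]].
    apply (Step U'); auto. }
  exists U. split; auto. split. intros x Hx; apply HA; auto.
  split; [|apply sameSpan_refl].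
  split; auto. split.
  - intros pre x post EU. split; intro Hd; apply HnB; exists pre, x, post; auto.
  - split; auto. intros u v w Hu Hv Hw H1 H2.
    destruct (Nat.lt_ge_cases (cc u v + cc v w) (length v)); auto.
    exfalso; apply HnD; exists u, v, w; repeat split; auto.
Qed.


Definition yv (a : letter) : Z :=
  match fst a with Y _ => if snd a then (-1)%Z else 1%Z | X _ => 0%Z end.
Definition ysum (w : word) : Z := fold_right (fun a acc => (yv a + acc)%Z) 0%Z w.

Lemma yv_flip : forall a, yv (flip a) = (- yv a)%Z.
Proof. intros [[m|n] [|]]; reflexivity. Qed.

Lemma ysum_app : forall u v, ysum (u ++ v) = (ysum u + ysum v)%Z.
Proof. induction u; simpl; intros; auto. rewrite IHu. lia. Qed.

Lemma ysum_winv : forall u, ysum (winv u) = (- ysum u)%Z.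
Proof.
  induction u as [|a u IH]; auto. rewrite winv_cons, ysum_app, IH. simpl. rewrite yv_flip. lia.
Qed.

Lemma ysum_fr : forall w, ysum (fr w) = ysum w.
Proof.
  induction w as [|a w IH]; auto. change (ysum (credr a (fr w)) = (yv a + ysum w)%Z).
  rewrite <- IH. destruct (fr w) as [|b r]; simpl; auto.
  destruct (leq_dec b (flip a)); simpl; auto. subst b. rewrite yv_flip. lia.
Qed.

Lemma ysum_ypos : forall k, ysum (ypos k) = 1%Z \/ ysum (ypos k) = (-1)%Z.
Proof.
  induction k. left; reflexivity.
  change (ypos (S k)) with ([(X (Z.of_nat (S k)), false)] ++ winv (ypos k) ++ [(X (Z.of_nat (S k)), true)]).
  rewrite !ysum_app, ysum_winv. simpl. lia.
Qed.

Lemma ysum_yneg : forall k, ysum (yneg k) = 1%Z \/ ysum (yneg k) = (-1)%Z.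
Proof.
  induction k. left; reflexivity.
  change (yneg (S k)) with ([(X (- Z.of_nat k), true)] ++ winv (yneg k) ++ [(X (- Z.of_nat k), false)]).
  rewrite !ysum_app, ysum_winv. simpl. lia.
Qed.

Lemma ysum_yexp : forall n, ysum (yexp n) <> 0%Z.
Proof.
  intros [|p|p]; unfold yexp.
  - destruct (ysum_ypos 0); lia.
  - destruct (ysum_ypos (Pos.to_nat p)); lia.
  - destruct (ysum_yneg (Pos.to_nat p)); lia.
Qed.

Lemma inv_pair : forall V x y, AR V -> NR V -> In x V -> In y V -> y = winv x -> False.
Proof.
  intros V x y HA HN Hx Hy E.
  destruct HN as [HN0 [HN1 _]].
  destruct (classic (y = x)) as [Exy|Nxy].
  - subst y. apply (HN0 x Hx). apply (winv_self (length x)); auto.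
  - destruct (in_split x V Hx) as [pre [post EV]]. subst V.
    apply (HN1 pre x post eq_refl). subst y. eapply in_mid_ne; eauto.
Qed.

Definition IV (V : list word) : Type := {x : word | In x V}.
Definition bV (V : list word) (i : IV V) : word := proj1_sig i.
Definition sg (V : list word) (p : IV V * bool) : word := if snd p then winv (bV V (fst p)) else bV V (fst p).

Lemma evalw_concat : forall V ws, evalw (bV V) ws = concat (map (sg V) ws).
Proof. intros V. induction ws as [|[i e] ws IH]; simpl; auto. rewrite IH. reflexivity. Qed.

Lemma sg_ne : forall V, AR V -> NR V -> forall i e j f, ~ (i = j /\ f = negb e) -> sg V (j, f) <> winv (sg V (i, e)).
Proof.
  intros V HA HN [x Hx] e [y Hy] f Hn E. unfold sg, bV in E; simpl in E.
  destruct e, f; rewrite ?winv_winv in E.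
  - apply (inv_pair V y x HA HN Hy Hx). auto.
  - subst y. apply Hn. split; auto. f_equal. apply proof_irrelevance.
  - apply winv_inj in E. subst y. apply Hn. split; auto. f_equal. apply proof_irrelevance.
  - apply (inv_pair V x y HA HN Hx Hy E).
Qed.

Lemma chainok_map : forall V, AR V -> NR V -> forall ws, reduced ws -> chainok (map (sg V) ws).
Proof.
  intros V HA HN.
  induction ws as [|[i e] ws IH]; simpl; auto.
  destruct ws as [|[j f] ws]; simpl; auto. intros [H1 H2]. split.
  - apply (sg_ne V HA HN i e j f H1).
  - apply IH. exact H2.
Qed.

Lemma pm_sg : forall V ws, Forall (pm V) (map (sg V) ws).
Proof.
  intros V. induction ws as [|[[x Hx] e] ws IH]; simpl; constructor; auto.
  unfold sg, bV; simpl. destruct e. right; rewrite winv_winv; auto. left; auto.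
Qed.

Lemma clean_evalw : forall V, (forall x, In x V -> clean x) -> forall ws, clean (evalw (bV V) ws).
Proof.
  intros V HC. induction ws as [|[[x Hx] e] ws IH]; simpl. intros a [].
  apply clean_app; auto. destruct e; unfold bV; simpl; auto using clean_winv.
Qed.

Lemma free_part : forall V, AR V -> (forall x, In x V -> clean x) -> NR V ->
  forall ws : list (IV V * bool), ws <> [] -> reduced ws -> ~ heq (evalw (bV V) ws) [].
Proof.
  intros V HA HC HN ws Hne Hr H. apply heq_iff in H. rewrite phi_clean in H by (apply clean_evalw; auto).
  simpl in H. rewrite evalw_concat in H.
  apply (chain_free V HA HN (map (sg V) ws)); auto.
  destruct ws; simpl; congruence. apply pm_sg. apply chainok_map; auto.
Qed.

Lemma lift_ws : forall V (ws : list (word * bool)), (forall p, In p ws -> In (fst p) V) ->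
  exists wsI : list (IV V * bool), evalw (bV V) wsI = evalw (fun u => u) ws.
Proof.
  intros V. induction ws as [|[x e] ws IH]; intros H. exists []; auto.
  assert (Hx : In x V) by (apply (H (x, e)); left; auto).
  destruct IH as [wsI E]. intros; apply H; right; auto.
  exists ((exist _ x Hx, e) :: wsI). simpl. rewrite E. reflexivity.
Qed.

Lemma heq_frphi : forall g, heq (fr (phi g)) g.
Proof.
  intros g. apply heq_iff. rewrite phi_clean. apply fr_fr. apply clean_fr, clean_phi.
Qed.

Theorem locally_free : H_locally_free.
Proof.
  intros gs.
  set (U0 := map (fun g => fr (phi g)) gs).
  assert (HA0 : AR2 U0).
  { intros x Hx. apply in_map_iff in Hx. destruct Hx as [g [<- _]].
    split. apply fr_red. apply clean_fr, clean_phi. }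
  destruct (reduce U0 HA0) as [V [HA2 [HA [HN [HS1 HS2]]]]].
  assert (HC : forall x, In x V -> clean x) by (intros x Hx; apply HA2; auto).
  assert (HU0gs : forall z, In z U0 -> gen_sub gs z).
  { intros z Hz. apply in_map_iff in Hz. destruct Hz as [g [<- Hg]].
    apply (gs_heq gs _ g). apply heq_frphi. apply gs_in; auto. }
  assert (HgsU0 : forall g, In g gs -> gen_sub U0 g).
  { intros g Hg. apply (gs_heq U0 _ (fr (phi g))). apply heq_sym, heq_frphi.
    apply gs_in. apply in_map_iff. exists g; auto. }
  exists (IV V), (bV V). split; [|split].
  - intros [x Hx]. unfold bV; simpl. apply (gs_trans U0); auto.
  - intros w Hw. assert (HwV : gen_sub V w).
    { apply (gs_trans U0); auto. apply (gs_trans gs); auto. }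
    destruct HwV as [ws [H1 H2]]. destruct (lift_ws V ws H1) as [wsI E].
    exists wsI. rewrite E. exact H2.
  - intros ws Hne Hr. apply free_part; auto.
Qed.

Theorem lemma3p1 :
  H_locally_free /\
  (forall m : Z, ~ heq (gx m) nil) /\
  (forall n : Z, ~ heq (gy n) nil).
Proof.
  split; [apply locally_free|split].
  - intros m H. apply heq_iff in H. unfold gx, phi in H. simpl in H. unfold phil in H; simpl in H.
    discriminate.
  - intros n H. apply heq_iff in H. unfold gy, phi in H. simpl in H. unfold phil in H; simpl in H.
    rewrite app_nil_r in H. apply (ysum_yexp n). rewrite <- ysum_fr, H. reflexivity.
Qed.
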